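(* Let $\Pi=\{321,312,123\}$ (consecutive patterns). For $n\ge 2$ let $I_n^{2}(q)=\sum q^{\mathrm{inv}(\pi)}$, the sum over those $\pi\in\mathrm{Av}_n(\Pi)$ with $\pi_{n-1}>\pi_n$ and either $n=2$ or $\pi_{n-2}<\pi_{n-1}$. Then $I_2^{2}(q)=q$, $I_3^{2}(q)=q+q^2$, $$I_n^{2}(q)=(q+q^2+\cdots+q^{n-1})\,I_{n-2}^{2}(q)\quad (n\ge 4),$$ and $I_n(\Pi;q)=I_{n-1}^{2}(q)+I_n^{2}(q)$ for $n\ge 3$. In particular, for $n\ge 4$, $$I_n(\Pi;q)=I_{n-1}^{2}(q)+(q+q^2+\cdots+q^{n-1})\,I_{n-2}^{2}(q).$$
   Context: For $\sigma\in S_3$ and $\pi=\pi_1\cdots\pi_n\in S_n$, $\pi$ contains the consecutive pattern $\sigma$ if there is an index $i$ with $1\le i\le n-2$ such that $\pi_i\pi_{i+1}\pi_{i+2}$ is order-isomorphic to $\sigma$; otherwise $\pi$ avoids $\sigma$. $\mathrm{Av}_n(\Pi)$ is the set of $\pi\in S_n$ avoiding every pattern in $\Pi$. $\mathrm{inv}(\pi)=\#\{(i,j):i<j,\ \pi_i>\pi_j\}$ and $I_n(\Pi;q)=\sum_{\pi\in\mathrm{Av}_n(\Pi)}q^{\mathrm{inv}(\pi)}$. Thus $I_n^{2}$ collects the avoiders whose final maximal decreasing run has length exactly $2$. *)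

(* Defs.v *)
From HB Require Import structures.
From mathcomp Require Import all_boot all_order all_algebra all_fingroup.
Set Implicit Arguments. Unset Strict Implicit. Unset Printing Implicit Defensive.
Import GRing.Theory.

(* One-line notation of a permutation s of {0..n-1}: [s(0); ...; s(n-1)]
   (values are 0-based; only relative order matters). *)
Definition word (n : nat) (s : 'S_n) : seq nat := [seq val (s i) | i <- enum 'I_n].

Definition order_iso (u v : seq nat) : bool :=
  (size u == size v) &&
  [forall j : 'I_(size u), forall k : 'I_(size u),
     (nth 0 u j < nth 0 u k) == (nth 0 v j < nth 0 v k)].

Definition contains_consec (w sigma : seq nat) : bool :=
  has (fun i => (i + size sigma <= size w) &&
                order_iso (take (size sigma) (drop i w)) sigma)
      (iota 0 (size w).+1).

Definition avoids_all (w : seq nat) (Pi : seq (seq nat)) : bool :=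
  all (fun sigma => ~~ contains_consec w sigma) Pi.

Definition Pi : seq (seq nat) := [:: [:: 3; 2; 1]; [:: 3; 1; 2]; [:: 1; 2; 3]].

Definition inv_w (w : seq nat) : nat :=
  \sum_(i < size w) \sum_(j < size w | i < j) (nth 0 w j < nth 0 w i).

Definition inv (n : nat) (s : 'S_n) : nat := inv_w (word s).

Definition I_Pi (n : nat) : {poly int} :=
  \sum_(s : 'S_n | avoids_all (word s) Pi) 'X^(inv s).

(* I_n^2(q): avoiders with pi_{n-1} > pi_n and (n = 2 or pi_{n-2} < pi_{n-1})
   (1-based in the paper; 0-based nth below) *)
Definition last_run2 (n : nat) (w : seq nat) : bool :=
  (nth 0 w (n - 1) < nth 0 w (n - 2)) &&
  ((n == 2) || (nth 0 w (n - 3) < nth 0 w (n - 2))).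

Definition I2 (n : nat) : {poly int} :=
  \sum_(s : 'S_n | avoids_all (word s) Pi && last_run2 n (word s)) 'X^(inv s).

(* Main.v *)
Require Import Defs.
From HB Require Import structures.
From mathcomp Require Import all_boot all_order all_algebra all_fingroup.
From mathcomp Require Import zify.
Import GRing.Theory.
Set Implicit Arguments. Unset Strict Implicit. Unset Printing Implicit Defensive.

Lemma oiso3 x y z a b c : order_iso [:: x; y; z] [:: a; b; c] =
  [&& (x<y)==(a<b), (x<z)==(a<c), (y<x)==(b<a), (y<z)==(b<c), (z<x)==(c<a) & (z<y)==(c<b)].
Proof.
rewrite /order_iso /=.
apply/forallP/idP.
  move=> H.
  have h := fun (j k : 'I_3) => forallP (H j) k.
  have := h (inord 0) (inord 1); have := h (inord 0) (inord 2);
  have := h (inord 1) (inord 0); have := h (inord 1) (inord 2);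
  have := h (inord 2) (inord 0); have := h (inord 2) (inord 1).
  by rewrite !inordK //= => -> -> -> -> -> ->.
case/andP=> H1 /andP[H2 /andP[H3 /andP[H4 /andP[H5 H6]]]] j; apply/forallP => k.
case: j => [[|[|[|j]]] Hj] //=; case: k => [[|[|[|k]]] Hk] //=; by rewrite !ltnn.
Qed.

Definition okw x y z := ~~ order_iso [:: x; y; z] [:: 3; 2; 1] &&
  ~~ order_iso [:: x; y; z] [:: 3; 1; 2] && ~~ order_iso [:: x; y; z] [:: 1; 2; 3].

Lemma okwE x y z : x != y -> y != z -> x != z ->
  okw x y z = ~~((y<x)&&(z<y)) && ~~((y<z)&&(z<x)) && ~~((x<y)&&(y<z)).
Proof.
move=> /eqP Hxy /eqP Hyz /eqP Hxz.
rewrite /okw !oiso3 /=.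
case: (ltngtP x y) => ?; case: (ltngtP y z) => ?; case: (ltngtP x z) => ? //=; lia.
Qed.


Fixpoint good (w : seq nat) : bool :=
  match w with
  | x :: ((y :: z :: _) as t) => okw x y z && good t
  | _ => true
  end.

Lemma cc_cons x w s : size s = 3 ->
  contains_consec (x :: w) s =
  ((3 <= size (x :: w)) && order_iso (take 3 (x :: w)) s) || contains_consec w s.
Proof.
move=> Hs; rewrite /contains_consec Hs.
change (iota 0 (size (x :: w)).+1) with (0 :: iota 1 (size w).+1).
rewrite (iotaDl 1 0) [has _ (_ :: _)]/= has_map.
congr (_ || _); apply: eq_has => i /=.
Qed.

Lemma cc_small w s : size s = 3 -> size w < 3 -> contains_consec w s = false.
Proof.
move=> Hs Hw; rewrite /contains_consec Hs; apply/hasPn => i _.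
by rewrite leqNgt (leq_trans Hw) // leq_addl.
Qed.

Lemma avoidsE w : avoids_all w Pi = [&& ~~ contains_consec w [::3;2;1],
  ~~ contains_consec w [::3;1;2], ~~ contains_consec w [::1;2;3] & true].
Proof. by []. Qed.

Lemma avoids_good w : avoids_all w Pi = good w.
Proof.
elim: w => [|x w IH] //.
case: w IH => [|y [|z r]] IH.
- by rewrite avoidsE !cc_small.
- by rewrite avoidsE !cc_small.
change (good [:: x, y, z & r]) with (okw x y z && good [:: y, z & r]).
rewrite avoidsE !(cc_cons x [:: y, z & r]) // -IH avoidsE /okw.
rewrite [take _ _]/= take0 [size _]/=.
case: (order_iso _ [:: 3; 2; 1]); case: (order_iso _ [:: 3; 1; 2]);
case: (order_iso _ [:: 1; 2; 3]); by rewrite /= ?andbF.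
Qed.

Lemma good_cons x s : good (x :: s) =
  (match s with y :: z :: _ => okw x y z | _ => true end) && good s.
Proof. by case: s => [|y [|z s]]. Qed.

Lemma good_rcons u a b c :
  good (rcons (rcons (rcons u a) b) c) = good (rcons (rcons u a) b) && okw a b c.
Proof.
elim: u => [|x u IH]; first by rewrite /= andbT.
rewrite [rcons (rcons (rcons _ _) _) _]/= [rcons (rcons _ _) _]/= !good_cons IH andbA.
by case: u {IH} => [|y [|z u]].
Qed.

Lemma avoids_rcons w x : avoids_all (rcons w x) Pi =
  avoids_all w Pi && ((2 <= size w) ==> okw (nth 0 w (size w - 2)) (nth 0 w (size w - 1)) x).
Proof.
rewrite !avoids_good.
case/lastP: w => [|w b]; first by [].
case/lastP: w => [|w a]; first by [].
rewrite good_rcons !size_rcons /=.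
rewrite !nth_rcons !size_rcons.
have -> : (size w).+2 - 2 = size w by lia.
have -> : (size w).+2 - 1 = (size w).+1 by lia.
by rewrite ltnn eqxx ltnSn ltnn eqxx.
Qed.


Lemma word_lift m (t : 'S_m) (j : 'I_m.+1) :
  word (lift_perm ord_max j t) = rcons (map (bump j) (word t)) j.
Proof.
rewrite /word enum_ordSr map_rcons lift_perm_id -!map_comp; congr rcons.
apply: eq_map => k /=.
have -> : widen_ord (leqnSn m) k = lift ord_max k.
  by apply: val_inj; rewrite /= /bump leqNgt ltn_ord.
by rewrite lift_perm_lift.
Qed.

Lemma size_word m (t : 'S_m) : size (word t) = m.
Proof. by rewrite /word size_map size_enum_ord. Qed.

Lemma uniq_word m (t : 'S_m) : uniq (word t).
Proof.
rewrite /word map_inj_uniq ?enum_uniq // => a b /val_inj; exact: perm_inj.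
Qed.

Lemma word_lt m (t : 'S_m) i : nth 0 (word t) i < m \/ m <= i.
Proof.
case: (ltnP i m) => H; last by right.
left; have : nth 0 (word t) i \in word t by rewrite mem_nth // size_word.
by case/mapP => k _ ->; apply: ltn_ord.
Qed.

Lemma perm_word m (t : 'S_m) : perm_eq (word t) (iota 0 m).
Proof.
have -> : word t = map val (map t (enum 'I_m)) by rewrite -map_comp.
rewrite -val_enum_ord.
apply: perm_map; apply: uniq_perm.
- by rewrite map_inj_uniq ?enum_uniq //; exact: perm_inj.
- exact: enum_uniq.
move=> x; rewrite mem_enum inE; apply/mapP; exists (t^-1 x)%g.
  by rewrite mem_enum.
by rewrite permKV.
Qed.

Lemma count_word m (t : 'S_m) j : j <= m -> count (fun y => j <= y) (word t) = m - j.
Proof.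
move=> jm; move/seq.permP: (perm_word t) => ->.
rewrite -(subnKC jm) iotaD count_cat add0n.
rewrite (eq_in_count (a2 := pred0)); last first.
  by move=> y; rewrite mem_iota => /andP[_]; rewrite add0n => H; rewrite leqNgt H.
rewrite count_pred0 add0n (eq_in_count (a2 := predT)); last first.
  by move=> y; rewrite mem_iota => /andP[H _].
by rewrite count_predT size_iota addKn.
Qed.

Lemma count_sum (p : pred nat) s :
  count p s = \sum_(i < size s) p (nth 0 s i).
Proof.
elim: s => [|x s IH]; first by rewrite big_ord0.
by rewrite /= big_ord_recl /= IH.
Qed.

Lemma inv_cons x w : inv_w (x :: w) = count (fun y => y < x) w + inv_w w.
Proof.
rewrite /inv_w /= big_ord_recl /=; congr addn.
  rewrite big_mkcond big_ord_recl /= add0n count_sum.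
  by apply: eq_bigr => i _.
apply: eq_bigr => i _.
rewrite big_mkcond big_ord_recl /= add0n [RHS]big_mkcond.
by apply: eq_bigr => k _.
Qed.

Lemma inv_rcons_bump j w :
  inv_w (rcons (map (bump j) w) j) = inv_w w + count (fun y => j <= y) w.
Proof.
elim: w => [|x w IH]; first by rewrite /inv_w /= big_ord_recl !big_ord0 big_mkcond big_ord_recl big_ord0.
rewrite [map _ _]/= [rcons _ _]/= !inv_cons IH -cats1 count_cat count_map /=.
have -> : count (preim (bump j) (fun y => y < bump j x)) w = count (fun y => y < x) w.
  by apply: eq_count => y /=; rewrite /bump; case: leqP; case: leqP => //= *; lia.
have -> : (j < bump j x) = (j <= x) by rewrite /bump; case: leqP => /= *; lia.
lia.
Qed.

Lemma inv_lift m (t : 'S_m) (j : 'I_m.+1) :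
  Defs.inv (lift_perm ord_max j t) = (Defs.inv t + (m - j))%N.
Proof.
by rewrite /Defs.inv word_lift inv_rcons_bump count_word // -ltnS.
Qed.


Section Decomp.
Variable n : nat.
Let ulsf (i : 'I_n.+1) (s : 'S_n.+1) k := odflt k (unlift (s i) (s (lift i k))).
Lemma ulsfK i (s : 'S_n.+1) k: lift (s i) (ulsf i s k) = s (lift i k).
Proof.
rewrite /ulsf; have:= neq_lift i k.
by rewrite -(can_eq (permK s)) => /unlift_some[] ? ? ->.
Qed.
Lemma inj_ulsf i s : injective (ulsf i s).
Proof.
apply: can_inj (ulsf (s i) s^-1%g) _ => k'.
by rewrite {1}/ulsf ulsfK !permK liftK.
Qed.

Lemma decomp (s : 'S_n.+1) : exists t : 'S_n, s = lift_perm ord_max (s ord_max) t.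
Proof.
exists (perm (@inj_ulsf ord_max s)); apply/permP=> k.
case: (unliftP ord_max k) => [k'|] ->; rewrite ?lift_perm_id //.
by rewrite lift_perm_lift permE ulsfK.
Qed.

Lemma sum_lift (R : nmodType) (F : 'S_n.+1 -> R) :
  (\sum_(s : 'S_n.+1) F s = \sum_(j < n.+1) \sum_(t : 'S_n) F (lift_perm ord_max j t))%R.
Proof.
rewrite (partition_big (fun s : 'S_n.+1 => s ord_max) xpredT) //.
apply: eq_bigr => j _.
rewrite (reindex (lift_perm ord_max j)); last first.
  exists (fun s => perm (@inj_ulsf ord_max s)) => [s _ | s].
    by apply/permP=> k'; rewrite permE /ulsf lift_perm_lift lift_perm_id liftK.
  move/(s _ =P _) => si0; apply/permP=> k.
  case: (unliftP ord_max k) => [k'|] ->; rewrite ?lift_perm_id //.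
  by rewrite lift_perm_lift -si0 permE ulsfK.
by apply: eq_bigl => t; rewrite lift_perm_id eqxx.
Qed.
End Decomp.


Ltac crush := repeat (rewrite /=; match goal with
 | |- context [?x <= ?y] => case: (leqP x y) => ?
 | |- context [?x == ?y] => case: (eqVneq x y) => ?
 end); rewrite /=; try by []; lia.

Lemma window m a b j bb : 2 <= m -> a < m -> b < m -> a != b -> j <= m ->
  (if b < a then a = m.-1 else b = m.-1) ->
  okw (bump j a) (bump j b) j && ((j < bump j b) == bb) =
  (if b < a then (j == m) && ~~ bb else (j < m) && bb).
Proof.
move=> m2 am bm ab jm H.
rewrite okwE; last 3 first.
- by rewrite (can_eq (bumpK j)).
- by rewrite eq_sym neq_bump.
- by rewrite eq_sym neq_bump.
move: H; rewrite /bump.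
case: (ltnP b a) => hab H; case: (leqP j a) => ?; case: (leqP j b) => ?; case: bb; crush.
Qed.

Lemma ltn_bump h x y : (bump h x < bump h y) = (x < y).
Proof. by rewrite !ltnNge leq_bump2. Qed.

Lemma okw_bump h x y z : okw (bump h x) (bump h y) (bump h z) = okw x y z.
Proof. by rewrite /okw !oiso3 !ltn_bump. Qed.

Lemma avoids_map h w : avoids_all (map (bump h) w) Pi = avoids_all w Pi.
Proof.
rewrite !avoids_good; elim: w => [|x w IH] //.
by rewrite map_cons !good_cons IH; case: w {IH} => [|y [|z w]] //=; rewrite okw_bump.
Qed.

Definition desc (w : seq nat) := nth 0 w (size w - 1) < nth 0 w (size w - 2).

Section Lift.
Variables (m : nat) (t : 'S_m) (j : 'I_m.+1).
Hypothesis m2 : 2 <= m.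
Let w := word t.
Let a := nth 0 w (m - 2).
Let b := nth 0 w (m - 1).

Lemma nth_lift i : i < m -> nth 0 (word (lift_perm ord_max j t)) i = bump j (nth 0 w i).
Proof.
move=> im; rewrite word_lift nth_rcons size_map size_word im.
by rewrite (nth_map 0) // size_word.
Qed.

Lemma nth_lift_last : nth 0 (word (lift_perm ord_max j t)) m = j.
Proof. by rewrite word_lift nth_rcons size_map size_word ltnn eqxx. Qed.

Lemma avoids_lift : avoids_all (word (lift_perm ord_max j t)) Pi =
  avoids_all w Pi && okw (bump j a) (bump j b) j.
Proof.
rewrite word_lift avoids_rcons size_map size_word m2 implyTb.
by rewrite avoids_map !(nth_map 0) ?size_word //; lia.
Qed.

Lemma desc_lift : desc (word (lift_perm ord_max j t)) = (j < bump j b).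
Proof.
rewrite /desc size_word.
have -> : m.+1 - 1 = m by lia.
have -> : m.+1 - 2 = m - 1 by lia.
by rewrite nth_lift_last nth_lift //; lia.
Qed.
End Lift.

Lemma word_ne m (t : 'S_m) i k : i < m -> k < m -> i != k ->
  nth 0 (word t) i != nth 0 (word t) k.
Proof. by move=> im km ik; rewrite nth_uniq ?size_word ?uniq_word. Qed.

Lemma word_lt' m (t : 'S_m) i : i < m -> nth 0 (word t) i < m.
Proof. by case: (word_lt t i) => // H1 H2; lia. Qed.

Lemma Inv m : 2 <= m -> forall t : 'S_m, avoids_all (word t) Pi ->
  if desc (word t) then nth 0 (word t) (m - 2) = m.-1
  else nth 0 (word t) (m - 1) = m.-1.
Proof.
elim: m => [|m IH] // m2 t Hav.
case: (ltnP m 2) => hm.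
  rewrite /desc size_word.
  have -> : m.+1 - 1 = 1 by lia.
  have -> : m.+1 - 2 = 0 by lia.
  have h0 := @word_lt' _ t 0 (ltn0Sn _).
  have h1 : nth 0 (word t) 1 < m.+1 by apply: word_lt'; lia.
  have h01 : nth 0 (word t) 0 != nth 0 (word t) 1 by apply: word_ne; lia.
  move: h0 h1 h01; set x := nth 0 _ 0; set y := nth 0 _ 1 => h0 h1 /eqP h01.
  case: ltnP => h; lia.
have [t' tE] := decomp t.
move: Hav; rewrite tE; move: (t ord_max) => j Hav.
have := Hav; rewrite avoids_lift // => /andP[Hav' Hok].
have := IH hm t' Hav'.
rewrite desc_lift //.
set a := nth 0 (word t') (m - 2); set b := nth 0 (word t') (m - 1).
have am : a < m by apply: word_lt'; lia.
have bm : b < m by apply: word_lt'; lia.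
have ab : a != b by apply: word_ne; lia.
have jm : j <= m by rewrite -ltnS.
rewrite /desc size_word => H.
have := window (j < bump j b) hm am bm ab jm H.
rewrite Hok eqxx /=.
have -> : m.+1 - 2 = m - 1 by lia.
have -> : m.+1 - 1 = m by lia.
case: (ltnP b a) => hab.
  move/esym/andP => [/eqP jE /negbTE ->]; by rewrite nth_lift_last.
move/esym/andP => [jlt ->]; rewrite nth_lift //; last by lia.
rewrite -/b; move: H; rewrite ltnNge hab /= => ->.
rewrite /bump; have -> : j <= m.-1 by lia.
by rewrite /=; lia.
Qed.


Lemma word1 (t : 'S_1) : word t = [:: 0].
Proof.
have := size_word t; have := @word_lt' _ t 0 isT.
by case: (word t) => [|x [|]] //= x1 _; have -> : x = 0 by lia.
Qed.

Lemma inv1 (t : 'S_1) : Defs.inv t = 0.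
Proof. by rewrite /Defs.inv word1 inv_cons /inv_w big_ord0. Qed.

Lemma S1 (t : 'S_1) : t = 1%g.
Proof. by apply/permP => i; rewrite !ord1. Qed.


Lemma step m (t : 'S_m) (j : 'I_m.+1) bb : 2 <= m ->
  (avoids_all (word (lift_perm ord_max j t)) Pi && (desc (word (lift_perm ord_max j t)) == bb)) =
  (avoids_all (word t) Pi && (if desc (word t) then (j == m :> nat) && ~~ bb else (j < m) && bb)).
Proof.
move=> m2; rewrite avoids_lift // desc_lift //.
case Hav: (avoids_all (word t) Pi) => //=.
have H := Inv m2 Hav.
move: H; rewrite /desc size_word => H.
rewrite (window bb m2) //.
- by apply: word_lt'; lia.
- by apply: word_lt'; lia.
- by apply: word_ne; lia.
- by rewrite -ltnS.
Qed.

Arguments avoids_all : simpl never.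
Arguments desc : simpl never.
Section SF.
Local Open Scope ring_scope.

Definition AV m bb : {poly int} :=
  \sum_(s : 'S_m | avoids_all (word s) Pi && (desc (word s) == bb)) 'X^(Defs.inv s).

Lemma AV_rec m bb : (2 <= m)%N ->
  AV m.+1 bb = if bb then AV m false * (\sum_(j < m) 'X^(m - j)) else AV m true.
Proof.
move=> m2; rewrite /AV big_mkcond sum_lift.
under eq_bigr => j _ do under eq_bigr => t _ do rewrite step // inv_lift.
rewrite big_ord_recr /=.
case: bb.
- rewrite [X in _ + X]big1 ?addr0; last first.
    by move=> t _; rewrite ltnn andbF; case: (desc _); rewrite ?andbF.
  rewrite big_distrr /=; apply: eq_bigr => i _.
  rewrite big_distrl [RHS]big_mkcond; apply: eq_bigr => t _ /=.
  rewrite ltn_ord andbT.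
  case: (avoids_all _ _) => //=; case: (desc _) => //=; first by rewrite andbF.
  by rewrite exprD.
- rewrite big1 ?add0r; last first.
    move=> i _; apply: big1 => t _.
    have -> : (i == m :> nat) = false by apply/negbTE; rewrite neq_ltn ltn_ord.
    by case: (avoids_all _ _); case: (desc _); rewrite /= ?andbF.
  rewrite [RHS]big_mkcond; apply: eq_bigr => t _ /=.
  rewrite eqxx subnn addn0 /=.
  by case: (avoids_all _ _); case: (desc _); rewrite /= ?andbF.
Qed.

End SF.

Section SG.
Local Open Scope ring_scope.

Lemma AV2 bb : AV 2 bb = if bb then 'X else 1.
Proof.
rewrite /AV big_mkcond sum_lift.
under eq_bigr => j _ do under eq_bigr => t _ do rewrite inv_lift inv1 word_lift word1.
under eq_bigr => j _ do rewrite sumr_const card_Sn /=.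
rewrite big_ord_recr big_ord_recr big_ord0 /= /desc /= !mulr1n add0r.
by case: bb => /=; rewrite ?addr0 ?add0r ?expr0 ?expr1.
Qed.

Lemma IPi_AV m : I_Pi m = AV m true + AV m false.
Proof.
rewrite /I_Pi (bigID (fun s : 'S_m => desc (word s))) /=.
by congr (_ + _); apply: eq_bigl => s; case: (desc _); rewrite ?andbT ?andbF.
Qed.

Lemma I2_AV m : (2 <= m)%N -> I2 m = AV m true.
Proof.
move=> m2; rewrite /I2 /AV; apply: eq_bigl => s.
case Hav: (avoids_all _ _) => //=.
have H := Inv m2 Hav.
rewrite /last_run2; move: H; rewrite /desc size_word.
case: ltnP => D H //=.
case: eqP => //= m3.
have h1 := @word_lt' _ s (m - 3) ltac:(lia).
have h2 : nth 0%N (word s) (m - 3) != nth 0%N (word s) (m - 2) by apply: word_ne; lia.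
move: h1 h2; rewrite H => h1 h2.
rewrite eqxx; move/eqP: h2 => h2; apply/idP; lia.
Qed.

Lemma sumX m : \sum_(j < m) 'X^(m - j) = \sum_(1 <= k < m.+1) 'X^k :> {poly int}.
Proof.
rewrite big_add1 /= big_mkord (reindex_inj rev_ord_inj) /=.
apply: eq_bigr => i _; congr ('X^_); have := ltn_ord i; lia.
Qed.

Lemma AVfalse m : (3 <= m)%N -> AV m false = I2 (m - 2).+1.
Proof.
move=> m3; case: m m3 => [|m] // m3.
rewrite AV_rec /=; last by lia.
rewrite I2_AV; last by lia.
by have -> : (m.+1 - 2).+1 = m by lia.
Qed.


End SG.

Local Open Scope ring_scope.

Theorem mainTheorem12 :
  I2 2 = 'X /\
  I2 3 = 'X + 'X^2 /\
  (forall n : nat, (4 <= n)%N ->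
     I2 n = (\sum_(1 <= k < n) 'X^k) * I2 (n - 2)) /\
  (forall n : nat, (3 <= n)%N -> I_Pi n = I2 (n - 1) + I2 n) /\
  (forall n : nat, (4 <= n)%N ->
     I_Pi n = I2 (n - 1) + (\sum_(1 <= k < n) 'X^k) * I2 (n - 2)).
Proof.
have rec : forall n : nat, (4 <= n)%N ->
     I2 n = (\sum_(1 <= k < n) 'X^k) * I2 (n - 2).
  case=> [|m] // m4.
  rewrite I2_AV; last by lia.
  rewrite AV_rec; last by lia.
  rewrite AVfalse; last by lia.
  rewrite sumX mulrC; congr (_ * I2 _); lia.
have pi : forall n : nat, (3 <= n)%N -> I_Pi n = I2 (n - 1) + I2 n.
  move=> n n3; rewrite IPi_AV AVfalse // addrC I2_AV; last by lia.
  rewrite !I2_AV; try lia; congr (AV _ _ + _); lia.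
split; first by rewrite I2_AV // AV2.
split.
  rewrite I2_AV // (@AV_rec 2) // AV2 mul1r big_ord_recr big_ord_recr big_ord0 /=.
  by rewrite add0r subn0 subn1 expr1 addrC.
split; first exact: rec.
split; first exact: pi.
move=> n n4; rewrite pi; last by lia.
by rewrite (rec n n4).
Qed.
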